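(* Let $G=(V,E)$ be a $d$-regular graph on $n$ vertices with adjacency matrix $A$, and let $D = d\cdot I_n$. Let $\{\phi_1,\dots,\phi_n\}\subset\mathbb{R}^n$ be an orthonormal basis of eigenvectors of the symmetric matrix $AD^{-1}$, where $\phi_j$ has eigenvalue $\lambda_j$, the eigenvalues are ordered as $1=\lambda_1 \geq |\lambda_2| \geq \dots \geq |\lambda_n|\geq 0$, and $\phi_1 = \frac{1}{\sqrt n}(1,1,\dots,1)$. Then for every $2 \leq \ell \leq n-1$ there exists a vector $0 \neq w \in \mathbb{R}^n_{\geq 0}$ such that (1) $w$ has at most $\ell$ nonzero entries, and (2) $\langle \phi_j, w\rangle = 0$ for all $2 \leq j \leq \ell$.
   Context: $\langle\cdot,\cdot\rangle$ denotes the standard inner product on $\mathbb{R}^n$, and vectors in $\mathbb{R}^n$ are indexed by the vertices of $G$. *)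

(* Defs.v *)
From HB Require Import structures.
From mathcomp Require Import all_boot all_order all_algebra.
Set Implicit Arguments. Unset Strict Implicit. Unset Printing Implicit Defensive.
Import Order.TTheory GRing.Theory Num.Theory.
Local Open Scope ring_scope.

Definition simple_graph (n : nat) (e : rel 'I_n) : Prop :=
  (forall i j, e i j = e j i) /\ (forall i, ~~ e i i).

Definition regular (n : nat) (e : rel 'I_n) (d : nat) : Prop :=
  forall i, #|[set j | e i j]| = d.

Definition adjmx (R : nzRingType) (n : nat) (e : rel 'I_n) : 'M[R]_n :=
  \matrix_(i, j) (e i j)%:R.

Definition dotv (R : nzRingType) (n : nat) (u v : 'cV[R]_n) : R :=
  \sum_(k < n) u k ord0 * v k ord0.

(* Main.v *)
Require Import Defs.
From HB Require Import structures.
From mathcomp Require Import all_boot all_order all_algebra.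
Import Order.TTheory GRing.Theory Num.Theory.
Local Open Scope ring_scope.

Section Core.
Variables (R : realFieldType) (n m : nat) (f : 'I_m -> 'I_n -> R).

Definition suppf (w : 'I_n -> R) := [set k | w k != 0].

Lemma kernel_vec (w : 'I_n -> R) : (m.+1 < #|suppf w|)%N ->
  exists x : 'I_n -> R, [/\ exists k, x k != 0, (forall k, w k = 0 -> x k = 0),
     \sum_k x k = 0 & forall j, \sum_k f j k * x k = 0].
Proof.
move=> Hs.
set S := suppf w.
pose C : 'M[R]_(#|S|, 1 + m) :=
  row_mx (const_mx 1) (\matrix_(i, j) f j (enum_val i)).
have : kermx C != 0.
  rewrite -mxrank_eq0 mxrank_ker subn_eq0 -ltnNge.
  exact: leq_ltn_trans (rank_leq_col C) _.
case/rowV0Pn => y /sub_kermxP; rewrite mul_mx_row => /eqP.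
rewrite row_mx_eq0 => /andP[/eqP h1 /eqP h2] ynz.
pose x := fun k => \sum_(i < #|S|) (enum_val i == k)%:R * y 0 i.
have key : forall g : 'I_n -> R, \sum_k g k * x k = \sum_i y 0 i * g (enum_val i).
  move=> g; rewrite /x.
  under eq_bigr do rewrite mulr_sumr.
  rewrite exchange_big /=; apply: eq_bigr => i _.
  rewrite (bigD1 (enum_val i)) //= eqxx mul1r big1 ?addr0; first by rewrite mulrC.
  by move=> k /negbTE; rewrite eq_sym => ->; rewrite mul0r mulr0.
exists x; split.
- have [i yi] : exists i, y 0 i != 0.
    apply/existsP; apply: contraR ynz => /existsPn H; apply/eqP/rowP => i.
    rewrite !mxE; apply/eqP; move: (H i); by rewrite negbK.
  exists (enum_val i); rewrite /x (bigD1 i) //= eqxx mul1r big1 ?addr0 //.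
  move=> i' ne; case: eqP => [/enum_val_inj E|_]; last by rewrite mul0r.
  by rewrite E eqxx in ne.
- move=> k wk; rewrite /x big1 // => i _.
  case: eqP => [E|_]; last by rewrite mul0r.
  have := enum_valP i; rewrite inE E wk eqxx //.
- transitivity (\sum_k (fun _ => 1) k * x k).
    by apply: eq_bigr => k _; rewrite mul1r.
  rewrite key; move/matrixP: h1 => /(_ 0 0); rewrite !mxE => H; rewrite -[RHS]H.
  by apply: eq_bigr => i _; rewrite mxE.
- move=> j; rewrite key; move/matrixP: h2 => /(_ 0 j); rewrite !mxE => H; rewrite -[RHS]H.
  by apply: eq_bigr => i _; rewrite mxE.
Qed.

Lemma descent_step (w : 'I_n -> R) : (forall k, 0 <= w k) -> 0 < \sum_k w k ->
  (forall j, \sum_k f j k * w k = 0) -> (m.+1 < #|suppf w|)%N ->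
  exists w' : 'I_n -> R, [/\ (forall k, 0 <= w' k), 0 < \sum_k w' k,
     (forall j, \sum_k f j k * w' k = 0) & (#|suppf w'| < #|suppf w|)%N].
Proof.
move=> w0 ws wf /kernel_vec [x [[k1 xk1] xs x0 xf]].
have [k2 xk2] : exists k, 0 < x k.
  case: (boolP [exists k, 0 < x k]) => [/existsP//|/existsPn H].
  have H' : forall k, true -> 0 <= - x k by move=> k _; rewrite oppr_ge0 leNgt H.
  have := psumr_eq0P H'; rewrite sumrN x0 oppr0 => /(_ erefl k1 erefl) /eqP.
  by rewrite oppr_eq0 (negbTE xk1).
pose k0 := [arg min_(k < k2 | 0 < x k) (w k / x k)]%O.
have [k0pos k0min] : 0 < x k0 /\ forall k, 0 < x k -> w k0 / x k0 <= w k / x k.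
  by rewrite /k0; case: arg_minP => // i Pi Hi; split => // k; apply: Hi.
set t := w k0 / x k0.
have t0 : 0 <= t by rewrite divr_ge0 // ltW.
exists (fun k => w k - t * x k); split.
- move=> k; case: (ltP 0 (x k)) => xk.
    by rewrite subr_ge0 -ler_pdivlMr //; apply: k0min.
  by rewrite subr_ge0; apply: le_trans (w0 k); rewrite mulr_ge0_le0.
- by rewrite sumrB -mulr_sumr x0 mulr0 subr0.
- move=> j; under eq_bigr do rewrite mulrBr mulrCA.
  by rewrite sumrB -mulr_sumr xf wf mulr0 subr0.
- have k0S : k0 \in suppf w.
    rewrite inE; apply/eqP => E; move: (xs _ E) => E'.
    by rewrite E' ltxx in k0pos.
  rewrite [X in (_ < X)%N](cardsD1 k0) k0S add1n ltnS.
  apply: subset_leq_card; apply/subsetP => k; rewrite !inE.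
  apply: contraNT; rewrite negb_and negbK.
  case/orP => [/eqP -> | /negPn/eqP wk].
    by rewrite /t divfK ?subrr // gt_eqF.
  by rewrite wk (xs _ wk) mulr0 subrr.
Qed.

Lemma core N (w : 'I_n -> R) : (#|suppf w| <= N)%N -> (forall k, 0 <= w k) ->
  0 < \sum_k w k -> (forall j, \sum_k f j k * w k = 0) ->
  exists w' : 'I_n -> R, [/\ (forall k, 0 <= w' k), 0 < \sum_k w' k,
     (forall j, \sum_k f j k * w' k = 0) & (#|suppf w'| <= m.+1)%N].
Proof.
elim: N w => [|N IH] w hN w0 ws wf.
  by exists w; split => //; apply: leq_trans hN _.
case: (leqP #|suppf w| m.+1) => hs; first by exists w.
have [w' [w'0 w's w'f w'c]] := descent_step w w0 ws wf hs.
by apply: (IH w') => //; rewrite -ltnS; apply: leq_trans w'c hN.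
Qed.
End Core.

Theorem lemma2 (R : rcfType) (n d : nat) (e : rel 'I_n)
  (phi : 'I_n -> 'cV[R]_n) (lambda : 'I_n -> R) :
  simple_graph e ->
  regular e d ->
  (0 < d)%N ->
  (forall i j : 'I_n, dotv (phi i) (phi j) = (i == j)%:R) ->
  (forall j : 'I_n,
     (adjmx R e *m invmx (d%:R%:M : 'M[R]_n)) *m phi j = lambda j *: phi j) ->
  (forall i : 'I_n, val i = 0%N -> lambda i = 1) ->
  (forall i j : 'I_n, (i <= j)%N -> `|lambda j| <= `|lambda i|) ->
  (forall i : 'I_n, val i = 0%N ->
     phi i = (Num.sqrt (n%:R))^-1 *: const_mx 1) ->
  forall l : nat, (2 <= l <= n.-1)%N ->
  exists w : 'cV[R]_n,
    [/\ w != 0,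
        (forall k, 0 <= w k ord0),
        (#|[set k | w k ord0 != 0%R]| <= l)%N &
        (forall j : 'I_n, (1 <= j <= l.-1)%N -> dotv (phi j) w = 0)].
Proof.
move=> _ _ _ orth _ _ _ phi0 l /andP[l2 ln].
destruct n as [|n']; first by rewrite /= leqn0 in ln; rewrite (eqP ln) in l2.
set c := (Num.sqrt (n'.+1%:R : R))^-1.
have p0 : phi ord0 = c *: const_mx 1 by apply: phi0.
have c0 : c != 0.
  apply/eqP => c0; have := orth ord0 ord0; rewrite eqxx p0 c0 scale0r /dotv.
  rewrite big1 => [/eqP|k _]; first by rewrite eq_sym oner_eq0.
  by rewrite mxE mul0r.
pose m := l.-1.
have ml : m.+1 = l by rewrite /m prednK // (leq_trans _ l2).
have ln' : (l <= n')%N by [].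
pose f : 'I_m -> 'I_n'.+1 -> R := fun j k => phi (inord j.+1) k ord0.
pose w0 : 'I_n'.+1 -> R := fun _ => 1.
have hw0 : forall j, \sum_k f j k * w0 k = 0.
  move=> j; have jn : (j.+1 <= n')%N.
    by apply: leq_trans _ ln'; rewrite -ml ltnS ltnW.
  have := orth (inord j.+1) ord0.
  have -> : (inord j.+1 == ord0 :> 'I_n'.+1) = false.
    by apply/negbTE; rewrite -val_eqE /= inordK.
  rewrite p0 /dotv => H.
  have : c * \sum_k f j k * w0 k = 0.
    apply: (etrans _ H); rewrite mulr_sumr; apply: eq_bigr => k _.
    by rewrite !mxE /f /w0 !mulr1 mulrC.
  by move/eqP; rewrite mulf_eq0 (negbTE c0) => /eqP.
have sw0 : 0 < \sum_k w0 k by rewrite /w0 sumr_const card_ord ltr0n.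
have [w' [w'0 w's w'f w'c]] := @core _ _ _ f _ w0 (leqnn _) (fun _ => ler01) sw0 hw0.
exists (\col_k w' k); split.
- apply/eqP => E; move: w's; rewrite big1 ?ltxx // => k _.
  by move/matrixP: E => /(_ k ord0); rewrite !mxE.
- by move=> k; rewrite mxE.
- have -> : [set k | (\col_k w' k) k ord0 != 0] = suppf R n'.+1 w'.
    by apply/setP => k; rewrite !inE mxE.
  by rewrite -ml.
- move=> j /andP[j1 jl].
  have jm : (j.-1 < m)%N by rewrite prednK.
  have := w'f (Ordinal jm); rewrite /f /dotv.
  have -> : (inord (Ordinal jm).+1 : 'I_n'.+1) = j.
    by apply: val_inj; rewrite /= prednK // inordK // prednK // ltn_ord.
  move=> H; rewrite -[RHS]H; apply: eq_bigr => k _; by rewrite mxE.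
Qed.
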